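(* Let $P$ be a priority forest in $\Pi(n)$. If $P$ is a tree, then $\mu(P,\hat1)=-1$. Otherwise $P=T_0\,T_1\cdots T_\ell$ with $\ell\ge1$, and $$\mu(P,\hat1)=(-1)^{\operatorname{corank}P}\prod_{k=0}^{\ell-1}e(T_k),$$ where $e(T)$ denotes the number of edges of $T$.
   Context: $[n]_0=\{0,\dots,n\}$. A priority forest on $[n]_0$ is a rooted forest with vertex set $[n]_0$ whose component trees $T_0,T_1,\dots,T_\ell$ (listed in this order) are increasing (each non-root vertex has a larger label than its parent) and satisfy: for $j<k$ every label of $T_j$ is smaller than every label of $T_k$. The priority lattice $\Pi(n)$ is the set of priority forests on $[n]_0$ ordered by inclusion of edge sets, together with an extra element $\hat1$ greater than all of them; $\mu$ denotes its Möbius function. Its rank function is $\rho(P)=|E(P)|$ and $\rho(\hat1)=n+1$; the corank of a priority forest $P$ is $n+1-\rho(P)$, which equals its number of component trees. *)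

(* Defs.v *)
From mathcomp Require Import all_boot all_order all_algebra.
Set Implicit Arguments. Unset Strict Implicit. Unset Printing Implicit Defensive.
Import GRing.Theory Num.Theory.

(* Computed by structural recursion with fuel; #|T| fuel suffices since any
   strict chain x < z1 < ... < y has at most #|T| elements. *)
Fixpoint mobius_fuel (T : finType) (le : rel T) (k : nat) (x y : T) : int :=
  match k with
  | 0 => 0%R
  | k'.+1 =>
      if x == y then 1%R
      else if le x y then
        (- \sum_(z : T | le x z && le z y && (z != y)) mobius_fuel le k' x z)%R
      else 0%R
  end.

Definition mobius (T : finType) (le : rel T) (x y : T) : int :=
  mobius_fuel le #|T| x y.

(* A rooted forest on 'I_n.+1 given by its parent function
   (None = the vertex is a root). *)
Definition forest (n : nat) := {ffun 'I_n.+1 -> option 'I_n.+1}.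

Definition edges n (p : forest n) : {set 'I_n.+1 * 'I_n.+1} :=
  [set e | p e.2 == Some e.1].

Definition increasing n (p : forest n) : bool :=
  [forall i, if p i is Some j then j < i else true].

(* root of the tree containing u (parents strictly decrease, so n steps suffice) *)
Definition proot n (p : forest n) (u : 'I_n.+1) : 'I_n.+1 :=
  iter n (fun x => odflt x (p x)) u.

(* the component trees can be listed so that for j < k every label of T_j is
   smaller than every label of T_k: any two distinct trees are label-separated *)
Definition priority_cond n (p : forest n) : bool :=
  [forall u, forall v, (proot p u != proot p v) ==>
     ([forall x, forall y,
         ((proot p x == proot p u) && (proot p y == proot p v)) ==> (x < y)]
      || [forall x, forall y,
         ((proot p x == proot p u) && (proot p y == proot p v)) ==> (y < x)])].

Definition priority_forest n (p : forest n) : bool :=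
  increasing p && priority_cond p.

Definition prio (n : nat) := {p : forest n | priority_forest p}.

(* Some P = priority forest P, None = \hat 1 *)
Definition Pi (n : nat) := option (prio n).

Definition Pi_le n : rel (Pi n) := fun x y =>
  match x, y with
  | _, None => true
  | None, Some _ => false
  | Some a, Some b => edges (val a) \subset edges (val b)
  end.

Definition mu n (x y : Pi n) : int := mobius (@Pi_le n) x y.

(* tree_roots of the component trees, in increasing order: T_0, ..., T_l
   (each tree's root is its least label, trees are label-separated) *)
Definition tree_roots n (p : forest n) : seq 'I_n.+1 :=
  [seq r <- enum 'I_n.+1 | p r == None].

Definition tree_edges n (p : forest n) (r : 'I_n.+1) : nat :=
  #|[set e in edges p | proot p e.2 == r]|.

Definition corank n (p : forest n) : nat := n.+1 - #|edges p|.

(* Main.v *)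
Require Import Defs.
From mathcomp Require Import all_boot all_order all_algebra.
From mathcomp Require Import zify ring lra.
Import GRing.Theory Num.Theory.
Set Implicit Arguments. Unset Strict Implicit. Unset Printing Implicit Defensive.


Section Mob.
Local Open Scope ring_scope.
Variables (T : finType) (le : rel T).
Hypothesis le_refl : reflexive le.
Hypothesis le_anti : antisymmetric le.
Hypothesis le_trans : transitive le.

Definition itv x y := [pred z | le x z && le z y].

Lemma fuel_stable k : forall x y, (#|itv x y| <= k)%N ->
  forall m, mobius_fuel le (k + m) x y = mobius_fuel le k x y.
Proof.
elim: k => [|k IH] x y hk m.
- case: m => [|m] //=.
  case: eqP => [exy|nxy].
    by move: hk; rewrite leqn0 => /eqP/card0_eq/(_ x); rewrite exy /= inE /= le_refl.
  case hle: (le x y) => //.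
  by move: hk; rewrite leqn0 => /eqP/card0_eq/(_ x); rewrite /= inE /= le_refl hle.
- rewrite addSn /=; case: eqP => // nxy; case hle: (le x y) => //.
  congr (- _); apply: eq_bigr => z /andP[/andP[hxz hzy] nzy].
  apply: IH.
  rewrite -ltnS; apply: leq_trans hk.
  apply: (proper_card (A := itv x z) (B := itv x y)).
  apply/properP; split.
    apply/subsetP => w; rewrite !inE /= => /andP[-> hwz] /=.
    exact: le_trans hwz hzy.
  exists y; first by rewrite inE /= hle le_refl.
  rewrite inE /= hle /=; apply/negP => hyz.
  have ezy := le_anti (x:=z) (y:=y); rewrite hzy hyz in ezy.
  by rewrite ezy // eqxx in nzy.
Qed.

Lemma mob_eq k x y : (#|itv x y| <= k)%N -> mobius_fuel le k x y = mobius le x y.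
Proof.
move=> hk; rewrite /mobius.
have h1 : (#|itv x y| <= #|T|)%N by apply: max_card.
rewrite -(subnKC h1) fuel_stable //.
rewrite -(subnKC hk) fuel_stable //.
Qed.

Lemma mob_refl x : mobius le x x = 1.
Proof.
rewrite /mobius; have : (0 < #|T|)%N by apply/card_gt0P; exists x.
by case: #|T| => //= k _; rewrite eqxx.
Qed.

Lemma mob_nle x y : ~~ le x y -> mobius le x y = 0.
Proof.
move=> h; rewrite /mobius; have : (0 < #|T|)%N by apply/card_gt0P; exists x.
case: #|T| => //= k _; case: eqP => [exy|_]; last by rewrite (negbTE h).
by move: h; rewrite exy le_refl.
Qed.

Lemma mob_rec x y : le x y -> x != y ->
  mobius le x y = - \sum_(z | le x z && le z y && (z != y)) mobius le x z.
Proof.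
move=> hle nxy.
have h1 : (#|itv x y| <= #|T|)%N by apply: max_card.
have h2 : (1 < #|itv x y|)%N.
  rewrite (cardD1 x) (cardD1 y) !inE /= le_refl hle eq_sym nxy /=.
  by rewrite le_refl.
rewrite {1}/mobius; move: h1 h2; case: #|T| => [|k] h1 h2 /=.
  by have := leq_trans h2 h1.
rewrite (negbTE nxy) hle; congr (- _); apply: eq_bigr => z /andP[/andP[hxz hzy] nzy].
apply: mob_eq.
rewrite -ltnS; apply: leq_trans h1.
apply: (proper_card (A := itv x z) (B := itv x y)).
apply/properP; split.
  apply/subsetP => w; rewrite !inE /= => /andP[-> hwz] /=.
  exact: le_trans hwz hzy.
exists y; first by rewrite inE /= hle le_refl.
rewrite inE /= hle /=; apply/negP => hyz.
have ezy := le_anti (x:=z) (y:=y); rewrite hzy hyz in ezy.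
  by rewrite ezy // eqxx in nzy.
Qed.

Lemma mob_left x y :
  \sum_(z : T) mobius le x z * (le z y)%:R = (x == y)%:R.
Proof.
rewrite (bigID (fun z => le x z && le z y)) /= [X in _ + X]big1; last first.
  move=> z; case hxz: (le x z); case hzy: (le z y) => //= _.
  - by rewrite mulr0.
  - by rewrite mob_nle ?hxz // mul0r.
  - by rewrite mob_nle ?hxz // mul0r.
rewrite addr0.
under eq_bigr => z /andP[_ ->] do rewrite mulr1.
case: (eqVneq x y) => [<-|nxy].
  rewrite (big_pred1 x) ?mob_refl //.
  move=> z; rewrite /= /pred1 /=; apply/idP/idP => [h|/eqP ->]; last by rewrite le_refl.
  by apply/eqP; apply: le_anti; rewrite andbC.
case hle: (le x y); last first.
  rewrite big_pred0 // => z; apply/negP => /andP[h1 h2].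
  by move: hle; rewrite (le_trans h1 h2).
rewrite (bigD1 y) /=; last by rewrite hle le_refl.
by rewrite mob_rec // addrC subrr.
Qed.

Lemma mob_right x y : le x y -> x != y ->
  \sum_(z | le x z && le z y) mobius le z y = 0.
Proof.
move=> hle nxy.
pose N := #|T|.
pose A : 'M[int]_N := \matrix_(i, j) mobius le (enum_val i) (enum_val j).
pose Z : 'M[int]_N := \matrix_(i, j) (le (enum_val i) (enum_val j))%:R.
have hAZ : A *m Z = 1%:M.
  apply/matrixP => i j; rewrite !mxE.
  rewrite (eq_bigr (fun k => mobius le (enum_val i) (enum_val k) * (le (enum_val k) (enum_val j))%:R)); last by move=> k _; rewrite !mxE.
  rewrite -(big_enum_val (A := predT) (fun z => mobius le (enum_val i) z * (le z (enum_val j))%:R)) /=.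
  by rewrite (eq_bigl xpredT) // mob_left (inj_eq enum_val_inj).
have := mulmx1C hAZ => /matrixP /(_ (enum_rank x)) /(_ (enum_rank y)).
rewrite !mxE.
rewrite (eq_bigr (fun k => (le (enum_val (enum_rank x)) (enum_val k))%:R * mobius le (enum_val k) (enum_val (enum_rank y)))); last by move=> k _; rewrite !mxE.
rewrite -(big_enum_val (A := predT) (fun z => (le (enum_val (enum_rank x)) z)%:R * mobius le z (enum_val (enum_rank y)))) /=.
rewrite (eq_bigl xpredT) // !enum_rankK.
have -> : (enum_rank x == enum_rank y) = false.
  by apply/negbTE; apply: contra nxy => /eqP/enum_rank_inj ->.
move=> h; apply: etrans h; symmetry.
rewrite (bigID (fun z => le x z && le z y)) /= [X in _ + X]big1 ?addr0; last first.
  move=> z; case hxz: (le x z); case hzy: (le z y) => //= _.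
  - by rewrite mob_nle ?hzy // mulr0.
  - by rewrite mul0r.
  - by rewrite mul0r.
by apply: eq_bigr => z /andP[-> _]; rewrite mul1r.
Qed.

End Mob.


Section Forest.
Variable n : nat.
Local Notation I := 'I_n.+1.
Local Notation F := (forest n).

Definition pstep (p : F) (x : I) := odflt x (p x).

Lemma incP (p : F) : increasing p -> forall c j, p c = Some j -> (j < c)%N.
Proof. by move=> /forallP h c j hc; move: (h c); rewrite hc. Qed.

Lemma inc_root0 (p : F) : increasing p -> p ord0 = None.
Proof. by move=> h; case e: (p ord0) => [j|] //; have := incP h e. Qed.

Lemma iter_prop (p : F) u k : increasing p ->
  p (iter k (pstep p) u) = None \/ (iter k (pstep p) u + k <= u)%N.
Proof.
move=> hi; elim: k => [|k IH]; first by right; rewrite addn0.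
rewrite iterS /pstep.
case e: (p (iter k (pstep p) u)) => [j|] /=; last by left.
right; have := incP hi e; case: IH => [h|h]; first by rewrite h in e.
move=> hj; rewrite addnS; apply: leq_trans h; by rewrite ltn_add2r.
Qed.

Lemma iter_le (p : F) u k : increasing p -> (iter k (pstep p) u <= u)%N.
Proof.
move=> hi; elim: k => [|k IH] //=; rewrite /pstep.
case e: (p _) => [j|] //=; apply: leq_trans IH; exact: ltnW (incP hi e).
Qed.

Lemma proot_root (p : F) u : increasing p -> p (proot p u) = None.
Proof.
move=> hi; rewrite /proot; case: (iter_prop u n hi); first by [].
move=> h.
have h0 : iter n (pstep p) u = ord0.
  apply: val_inj => /=; have := ltn_ord u; lia.
by rewrite /pstep in h0 *; rewrite h0 inc_root0.
Qed.

Lemma proot_le (p : F) u : increasing p -> (proot p u <= u)%N.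
Proof. exact: iter_le. Qed.

Lemma proot_id (p : F) u : p u = None -> proot p u = u.
Proof.
move=> h; rewrite /proot.
have gen : forall k, iter k (fun x => odflt x (p x)) u = u.
  by elim=> [|k IH] //=; rewrite IH h.
exact: gen.
Qed.

Lemma proot_par (p : F) u j : increasing p -> p u = Some j -> proot p u = proot p j.
Proof.
move=> hi h; rewrite /proot.
have -> : j = (fun x => odflt x (p x)) u by rewrite h.
rewrite -iterSr iterS; by have := proot_root u hi; rewrite /proot => ->.
Qed.

Lemma proot_idem (p : F) u : increasing p -> proot p (proot p u) = proot p u.
Proof. by move=> hi; rewrite proot_id // proot_root. Qed.

Definition good (p : F) : bool :=
  [forall c, forall r, if p c is Some j then (p r == None) ==> ~~ ((j < r)%N && (r <= c)%N) else true].

Lemma goodE (p : F) : good p -> forall c j r, p c = Some j -> p r = None -> ~~ ((j < r)%N && (r <= c)%N).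
Proof.
by move=> /forallP h c j r hc hr; move: (h c) => /forallP /(_ r); rewrite hc hr.
Qed.

Lemma goodI (p : F) : (forall c j r, p c = Some j -> p r = None -> ~~ ((j < r)%N && (r <= c)%N)) -> good p.
Proof.
move=> h; apply/forallP => c; apply/forallP => r.
case e: (p c) => [j|] //; apply/implyP => /eqP hr; exact: h e hr.
Qed.

Lemma proot_max (p : F) : increasing p -> good p ->
  forall u r, p r = None -> (proot p u < r)%N -> (u < r)%N.
Proof.
move=> hi hg u r hr.
have [m hm] := ubnP (nat_of_ord u); elim: m u hm => [|m IH] u hm //.
case e: (p u) => [j|]; last by rewrite proot_id.
rewrite (proot_par hi e) => hjr.
have hju := incP hi e.
have hjm : (j < m)%N by apply: leq_trans hju _; rewrite -ltnS.
have hj := IH j hjm hjr.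
have := goodE hg e hr; rewrite hj /= -ltnNge; done.
Qed.

Lemma prio_inc (p : F) : priority_forest p -> increasing p.
Proof. by case/andP. Qed.

Lemma prio_good (p : F) : priority_forest p -> good p.
Proof.
case/andP=> hi /forallP hp; apply: goodI => c j r hc hr.
apply/negP => /andP[hjr hrc].
have hpc : (proot p c < r)%N.
  rewrite (proot_par hi hc); apply: leq_ltn_trans hjr; exact: proot_le.
move: (hp c) => /forallP /(_ r) /implyP.
rewrite (proot_id hr).
have -> : proot p c != r by apply/eqP => e; rewrite e ltnn in hpc.
move=> /(_ isT) /orP [/forallP h|/forallP h].
- move: (h c) => /forallP /(_ r) /implyP; rewrite eqxx (proot_id hr) eqxx => /(_ isT).
  by rewrite ltnNge hrc.
- move: (h (proot p c)) => /forallP /(_ r) /implyP.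
  rewrite proot_idem // eqxx (proot_id hr) eqxx => /(_ isT).
  by rewrite ltnNge (ltnW hpc).
Qed.

Lemma good_prio (p : F) : increasing p -> good p -> priority_forest p.
Proof.
move=> hi hg; rewrite /priority_forest hi /=.
apply/forallP => u; apply/forallP => v; apply/implyP => nuv.
have ra := proot_root u hi; have rb := proot_root v hi.
case: (ltngtP (proot p u) (proot p v)) => [ab|ba|e]; last by move/val_inj: e => e; rewrite e eqxx in nuv.
- apply/orP; left; apply/forallP => x; apply/forallP => y; apply/implyP => /andP[/eqP hx /eqP hy].
  have hxb : (x < proot p v)%N by apply: (proot_max hi hg rb); rewrite hx.
  apply: leq_trans hxb _; rewrite -hy; exact: proot_le.
- apply/orP; right; apply/forallP => x; apply/forallP => y; apply/implyP => /andP[/eqP hx /eqP hy].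
  have hya : (y < proot p u)%N by apply: (proot_max hi hg ra); rewrite hy.
  apply: leq_trans hya _; rewrite -hx; exact: proot_le.
Qed.

Lemma prioE (p : F) : priority_forest p = increasing p && good p.
Proof.
apply/idP/andP => [h|[h1 h2]]; last exact: good_prio.
by split; [apply: prio_inc | apply: prio_good].
Qed.

End Forest.


Section Roots.
Variable n : nat.
Local Notation I := 'I_n.+1.
Local Notation F := (forest n).

Definition ltI : rel I := fun a b => (a < b)%N.
Lemma ltI_trans : transitive ltI.
Proof. move=> a b c; exact: ltn_trans. Qed.

Lemma sorted_enumI : sorted ltI (enum I).
Proof.
have := iota_ltn_sorted 0 n.+1; rewrite -val_enum_ord sorted_map; done.
Qed.

Lemma mem_roots (p : F) x : (x \in tree_roots p) = (p x == None).
Proof. by rewrite mem_filter mem_enum andbT. Qed.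

Lemma sorted_roots (p : F) : sorted ltI (tree_roots p).
Proof. exact: (sorted_filter ltI_trans _ sorted_enumI). Qed.

Lemma size_roots (p : F) : size (tree_roots p) = #|[pred x | p x == None]|.
Proof.
rewrite cardE; apply: perm_size; apply: uniq_perm.
- by rewrite filter_uniq // enum_uniq.
- exact: enum_uniq.
- by move=> x; rewrite mem_filter !mem_enum andbT.
Qed.

Lemma filter_last (s : seq I) (pr : pred I) r : sorted ltI s -> r \in s -> pr r ->
  (forall x, x \in s -> pr x -> (x <= r)%N) ->
  filter pr s = rcons (filter (fun x => (x != r) && pr x) s) r.
Proof.
elim: s => [|x s IH] //= hs; rewrite inE => hr hpr hmax.
have hs' : sorted ltI s by apply: path_sorted hs.
have hall := order_path_min ltI_trans hs.
case: (eqVneq x r) => [exr|nxr] /=.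
- subst x; rewrite hpr /=.
  have -> : filter pr s = [::].
    rewrite (eq_in_filter (a2 := pred0)) ?filter_pred0 // => y hy /=.
    apply/negP => hy2; have hys : y \in r :: s by rewrite inE hy orbT.
    have := hmax y hys hy2.
    by move/allP: hall => /(_ y hy); rewrite /ltI => hry hyr; lia.
  have -> : filter (fun x => (x != r) && pr x) s = [::].
    rewrite (eq_in_filter (a2 := pred0)) ?filter_pred0 // => y hy /=.
    apply/negP => /andP[_ hy2]; have hys : y \in r :: s by rewrite inE hy orbT.
    have := hmax y hys hy2.
    by move/allP: hall => /(_ y hy); rewrite /ltI => hry hyr; lia.
  by [].
- rewrite eq_sym (negbTE nxr) in hr; rewrite /= in hr.
  rewrite IH //; last by move=> y hy; apply: hmax; rewrite inE hy orbT.
  by case: (pr x).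
Qed.

Lemma last_max (x : I) s : path ltI x s -> forall y, y \in x :: s -> (y <= last x s)%N.
Proof.
elim: s x => [|z s IH] x /=; first by move=> _ y; rewrite inE => /eqP ->.
case/andP=> hxz hp y; rewrite inE => /orP [/eqP ->|hy].
  apply: leq_trans (ltnW hxz) _; apply: IH => //; exact: mem_head.
exact: IH.
Qed.

Definition upd (q : F) (r : I) (o : option I) : F := [ffun c => if c == r then o else q c].

Lemma updE q r o c : upd q r o c = if c == r then o else q c.
Proof. by rewrite ffunE. Qed.

Lemma upd_id q r : upd q r (q r) = q.
Proof. by apply/ffunP => c; rewrite updE; case: eqP => // ->. Qed.

Lemma upd_upd q r o o' : upd (upd q r o) r o' = upd q r o'.
Proof. by apply/ffunP => c; rewrite !updE; case: eqP. Qed.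

Definition ext (P q : F) : bool := [forall c, if P c is Some j then q c == Some j else true].

Lemma extE (P q : F) : (edges P \subset edges q) = ext P q.
Proof.
apply/subsetP/forallP => [h c|h [j c]].
  case e: (P c) => [j|] //.
  by have := h (j, c); rewrite !inE /= e eqxx => /(_ isT).
rewrite !inE /= => /eqP e; by move: (h c); rewrite e.
Qed.

Lemma extP (P q : F) c j : ext P q -> P c = Some j -> q c = Some j.
Proof. by move=> /forallP /(_ c) h e; rewrite e in h; apply/eqP. Qed.

Lemma ext_root (P q : F) c : ext P q -> q c = None -> P c = None.
Proof. by move=> h hq; case e: (P c) => [j|] //; rewrite (extP h e) in hq. Qed.

Lemma ext_refl (P : F) : ext P P.
Proof. by apply/forallP => c; case: (P c). Qed.

Lemma ext_upd (P q : F) r o : P r = None -> ext P (upd q r o) = ext P q.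
Proof.
move=> hr; apply/forallP/forallP => h c; move: (h c); rewrite ?updE;
  case: eqP => [->|_]; rewrite ?hr //.
Qed.

Lemma ext_updP (P q : F) r v : P r = None ->
  ext (upd P r (Some v)) q = ext P q && (q r == Some v).
Proof.
move=> hr; apply/forallP/andP => [h|[/forallP h1 /eqP h2] c].
  split; last by move: (h r); rewrite updE eqxx.
  apply/forallP => c; move: (h c); rewrite updE; case: eqP => [->|//]; by rewrite hr.
rewrite updE; case: eqP => [->|_]; by [rewrite h2 | apply: h1].
Qed.

Definition G (s : seq I) : GRing.Zmodule.sort int :=
  ((-1) ^+ size s * \prod_(k < (size s).-1) (((nth ord0 s k.+1 : nat) - nth ord0 s k - 1)%N)%:Z)%R.

Lemma G_rcons x s0 r : G (rcons (x :: s0) r) = (- (((r : nat) - last x s0 - 1)%N%:Z) * G (x :: s0))%R.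
Proof.
rewrite /G size_rcons /= big_ord_recr /= exprS.
rewrite -rcons_cons.
have -> : nth ord0 (rcons s0 r) (size s0) = r.
  by rewrite nth_rcons /= ltnn eqxx.
have -> : nth ord0 (rcons (x :: s0) r) (size s0) = last x s0.
  rewrite nth_rcons /= ltnS leqnn.
  by have := nth_last ord0 (x :: s0) => /= ->.
rewrite (eq_bigr (fun k : 'I_(size s0) => ((nth ord0 s0 k : nat) - nth ord0 (x :: s0) k - 1)%N%:Z%R)); last first.
  by move=> k _ /=; rewrite -rcons_cons !nth_rcons /= ltn_ord ltnS (ltnW (ltn_ord k)).
by ring.
Qed.

Lemma card_range m a b : (b <= m)%N -> #|[pred v : 'I_m | (a <= v)%N && (v < b)%N]| = (b - a)%N.
Proof.
elim: b => [|b IH] hb.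
  rewrite (eq_card (B := pred0)) ?card0 // => v; by rewrite !inE /= ltn0 andbF.
have hb' : (b <= m)%N by apply: ltnW.
case: (leqP a b) => hab.
  rewrite (cardD1 (Ordinal hb)) inE /= hab leqnn /=.
  rewrite (eq_card (B := [pred v : 'I_m | (a <= v)%N && (v < b)%N])) ?IH //; first lia.
  move=> v; rewrite !inE /=.
  case: (eqVneq v (Ordinal hb)) => [->|nv] /=; first by rewrite ltnn andbF.
  have hvb : (v : nat) != b by apply: contra nv => /eqP e; apply/eqP/val_inj.
  by rewrite ltnS [(v <= b)%N]leq_eqVlt (negbTE hvb).
rewrite (eq_card (B := pred0)) ?card0; first lia.
move=> v; rewrite !inE /=; apply/negP => /andP[h1 h2]; lia.
Qed.

End Roots.


Lemma big_option_split (T : finType) (X : pred (option T)) (f : option T -> int) :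
  (\sum_(o | X o) f o = (if X None then f None else 0) + \sum_(v | X (Some v)) f (Some v))%R.
Proof.
rewrite big_mkcond (bigD1 None) //=; congr (_ + _)%R.
rewrite (reindex_omap Some (fun o => o)); last by case.
rewrite [RHS]big_mkcond; apply: eq_bigl => v /=; by rewrite eqxx.
Qed.

Section Step.
Variable n : nat.
Local Notation I := 'I_n.+1.
Local Notation F := (forest n).
Variables (P : F) (r : I).
Hypothesis hP : priority_forest P.
Hypothesis hPr : P r = None.
Hypothesis hmax : forall x, P x = None -> (x <= r)%N.
Hypothesis hr0 : (0 < r)%N.

Definition r1 : I := Ordinal (leq_ltn_trans (leq_pred r) (ltn_ord r)).

Lemma ext_max q x : ext P q -> q x = None -> (x <= r)%N.
Proof. by move=> he hx; apply: hmax; apply: ext_root he hx. Qed.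

Lemma Pstar_prio : priority_forest (upd P r (Some r1)).
Proof.
rewrite prioE; apply/andP; split.
  apply/forallP => c; rewrite updE; case: eqP => [->|_] /=; first by lia.
  by move: (prio_inc hP) => /forallP /(_ c).
apply: goodI => c j r' hc; rewrite updE; case: eqP => // nr' hr'.
move: hc; rewrite updE; case: eqP => [ec [<-]|nc hc].
  have := hmax hr'; rewrite ec /=.
  have : (r' : nat) != r by apply/eqP => e; apply: nr'; apply: val_inj.
  lia.
by have := goodE (prio_good hP) hc hr'.
Qed.

Lemma roots_upd (q : F) v : q r = None -> (forall x, q x = None -> (x <= r)%N) ->
  tree_roots q = rcons (tree_roots (upd q r (Some v))) r.
Proof.
move=> hq hm; rewrite /tree_roots (filter_last (r := r)).
- congr rcons; apply: eq_filter => x; rewrite updE; by case: eqP.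
- exact: sorted_enumI.
- exact: mem_enum.
- by rewrite hq.
- by move=> x _ /eqP; apply: hm.
Qed.

Lemma prio_down (q : F) v : ext P q -> q r = None ->
  priority_forest (upd q r (Some v)) -> priority_forest q.
Proof.
move=> he hq; rewrite !prioE => /andP[hi hg]; apply/andP; split.
  apply/forallP => c; case: (eqVneq c r) => [->|nc]; first by rewrite hq.
  by move/forallP: hi => /(_ c); rewrite updE (negbTE nc).
apply: goodI => c j r' hc hr'.
have nc : c != r by apply/eqP => e; rewrite e hq in hc.
case: (eqVneq r' r) => [er|nr].
  subst r'; case: (leqP r c) => hrc; last by rewrite andbF.
  case ePc: (P c) => [j0|].
    have := extP he ePc; rewrite hc => -[ej]; rewrite -ej in ePc.
    by have := goodE (prio_good hP) ePc hPr; rewrite hrc.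
  have := hmax ePc => hcr.
  have : c = r by apply: val_inj; apply/eqP; rewrite eqn_leq hcr hrc.
  by move/eqP; rewrite (negbTE nc).
apply: (goodE hg (c := c)); by rewrite updE ?(negbTE nc) ?(negbTE nr).
Qed.

Section Up.
Variable q : F.
Hypothesis hq : priority_forest q.
Hypothesis he : ext P q.
Hypothesis hqr : q r = None.

Definition sq := [seq x <- enum I | (x != r) && (q x == None)].
Definition aq := last ord0 sq.

Lemma ord0_sq : ord0 \in sq.
Proof.
rewrite mem_filter mem_enum andbT inc_root0 ?prio_inc // eqxx andbT.
by apply/eqP => e; move: hr0; rewrite -e.
Qed.

Lemma sq_sorted : sorted (@ltI n) sq.
Proof. rewrite /sq; exact: (sorted_filter (@ltI_trans n) _ (@sorted_enumI n)). Qed.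

Lemma aq_mem : aq \in sq.
Proof.
rewrite /aq; have := ord0_sq; case: sq => [|x s] //= _; exact: mem_last.
Qed.

Lemma aq_max y : y \in sq -> (y <= aq)%N.
Proof.
rewrite /aq; have := sq_sorted; case: sq => [|x s] //= hs hy.
exact: last_max hs y hy.
Qed.

Lemma aq_lt : (aq < r)%N.
Proof.
have := aq_mem; rewrite mem_filter => /andP[/andP[na /eqP ha] _].
have := ext_max he ha; rewrite leq_eqVlt => /orP[/eqP e|//].
by move: na; rewrite (_ : aq = r) ?eqxx //; apply: val_inj.
Qed.

Lemma prio_up v : priority_forest (upd q r (Some v)) = (aq <= v)%N && (v < r)%N.
Proof.
have [na ha] : aq != r /\ q aq = None.
  by have := aq_mem; rewrite mem_filter => /andP[/andP[na /eqP ha] _].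
apply/idP/andP => [h|[h1 h2]].
  have hvr : (v < r)%N by apply: (incP (prio_inc h) (c := r)); rewrite updE eqxx.
  split => //.
  have := goodE (prio_good h) (c := r) (j := v) (r := aq).
  rewrite !updE eqxx (negbTE na) => /(_ erefl ha).
  rewrite (ltnW aq_lt) andbT; lia.
rewrite prioE; apply/andP; split.
  apply/forallP => c; rewrite updE; case: eqP => [->|_] //.
  by move: (prio_inc hq) => /forallP /(_ c).
apply: goodI => c j r' hc; rewrite updE; case: eqP => // nr' hr'.
move: hc; rewrite updE; case: eqP => [ec [<-]|nc hc].
  have : r' \in sq by rewrite mem_filter mem_enum hr' eqxx andbT andbT; apply/eqP.
  move/aq_max => hra; lia.
by have := goodE (prio_good hq) hc hr'.
Qed.

Lemma roots_up v : tree_roots (upd q r (Some v)) = sq.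
Proof. apply: eq_filter => x; rewrite updE; by case: (x == r). Qed.

Lemma roots_q : tree_roots q = rcons sq r.
Proof. rewrite (roots_upd ord0 hqr) ?roots_up //; move=> x; exact: ext_max. Qed.

End Up.

Lemma sum_step :
  (\sum_(q | priority_forest q && ext P q) G (tree_roots q) =
   \sum_(q | priority_forest q && ext (upd P r (Some r1)) q) G (tree_roots q))%R.
Proof.
rewrite (partition_big (fun q => upd q r None) (fun q' => q' r == None)); last first.
  by move=> q _; rewrite updE eqxx.
rewrite [RHS](partition_big (fun q => upd q r None) (fun q' => q' r == None)); last first.
  by move=> q _; rewrite updE eqxx.
apply: eq_bigr => q' /eqP hq'.
have e1 : upd q' r None = q' by rewrite -hq' upd_id.
have simp : forall (C : pred F) o,
  (C (upd q' r o) && (upd (upd q' r o) r None == q')) && (upd q' r o r == o) = C (upd q' r o).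
  by move=> C o; rewrite upd_upd e1 eqxx updE eqxx eqxx !andbT.
rewrite (reindex_onto (upd q' r) (fun q => q r)); last first.
  by move=> q /andP[_ /eqP <-]; rewrite upd_upd upd_id.
rewrite [RHS](reindex_onto (upd q' r) (fun q => q r)); last first.
  by move=> q /andP[_ /eqP <-]; rewrite upd_upd upd_id.
rewrite (eq_bigl _ _ (simp (fun q => priority_forest q && ext P q))).
rewrite (eq_bigl _ _ (simp (fun q => priority_forest q && ext (upd P r (Some r1)) q))).
rewrite !big_option_split /=.
rewrite e1 ext_updP // hq' /= !andbF /=. rewrite [X in (_ = X)%R]add0r.
under eq_bigl => v do rewrite ext_upd //.
under [in RHS]eq_bigl => v do rewrite ext_updP // ext_upd // updE eqxx.
case hext: (ext P q'); last first.
  by rewrite !andbF /= add0r !big_pred0 // => v; rewrite andbF.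
case hpq: (priority_forest q'); last first.
  rewrite /= add0r !big_pred0 // => v; apply/negP => /andP[h _];
    by rewrite (prio_down hext hq' h) in hpq.
rewrite /=.
have hm : forall x, q' x = None -> (x <= r)%N by move=> x; apply: ext_max.
rewrite (roots_q hext hq').
under eq_bigr => v _ do rewrite (roots_up q' v).
under [in RHS]eq_bigr => v _ do rewrite (roots_up q' v).
under eq_bigl => v do rewrite andbT (prio_up hpq hext).
under [in RHS]eq_bigl => v do rewrite (prio_up hpq hext) /=.
have hal := aq_lt hpq hext.
rewrite [RHS](big_pred1 r1); last first.
  move=> v /=; apply/idP/idP => [/andP[_ /eqP [->]]|/eqP ->] //.
  by rewrite /= eqxx andbT; apply/andP; split; rewrite /=; lia.
rewrite sumr_const.
rewrite (_ : #|(fun i : I => (aq q' <= i < r)%N)| = (r - aq q')%N); last first.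
  exact: card_range _ (ltnW (ltn_ord r)).
move: hal (ord0_sq hpq); rewrite /aq; case: (sq q') => [|x s0] // hal _.
rewrite G_rcons /=.
set g := G _; set a := last x s0.
have [k [-> ->]] : exists k, (r - a)%N = k.+1 /\ (r - a - 1)%N = k.
  by exists (r - a - 1)%N; rewrite /a; move: hal => /= hal; lia.
rewrite mulrS -mulr_natr natz; ring.
Qed.

End Step.


Section Main.
Variable n : nat.
Local Notation I := 'I_n.+1.
Local Notation F := (forest n).

Lemma sumC k : forall P : F, priority_forest P -> size (tree_roots P) = k.+1 ->
  (\sum_(q | priority_forest q && ext P q) G (tree_roots q) = -1)%R.
Proof.
elim: k => [|k IH] P hP hs.
  have hroots c : P c = None -> c = ord0.
    move=> hc; have h1 : c \in tree_roots P by rewrite mem_roots hc.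
    have h2 : ord0 \in tree_roots P by rewrite mem_roots inc_root0 ?prio_inc.
    move: hs h1 h2; case: (tree_roots P) => [|y [|z s]] //= _.
    by rewrite !inE => /eqP -> /eqP ->.
  rewrite (big_pred1 P); first by rewrite /G hs expr1 big_ord0 mulr1.
  move=> q /=; apply/andP/eqP => [[hq he]|->]; last by split; [done | exact: ext_refl].
  apply/ffunP => c; case e: (P c) => [j|]; first exact: extP he e.
  by rewrite (hroots c e) inc_root0 ?prio_inc.
move: hs; case hR: (tree_roots P) => [|y R'] // hs.
have hsort : path (@ltI n) y R' by have := sorted_roots P; rewrite hR.
have hr0 : (0 < last y R')%N.
  move: hs hsort; case: (R') => [|z R''] //= _ /andP[hyz hp].
  have := last_max hp (mem_head z R''); rewrite /ltI in hyz; lia.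
set r := last y R' in hr0.
have hrR : r \in tree_roots P by rewrite hR mem_last.
have hPr : P r = None by move: hrR; rewrite mem_roots => /eqP.
have hmax x : P x = None -> (x <= r)%N.
  move=> hx; have : x \in y :: R' by rewrite -hR mem_roots hx.
  exact: last_max hsort x.
have hP' := Pstar_prio hP hmax hr0.
rewrite (sum_step hP hPr hmax hr0).
apply: IH => //.
rewrite (roots_upd (r1 r) hPr hmax) in hR.
have hsz := congr1 size hR; rewrite size_rcons hs in hsz; by case: hsz.
Qed.

Lemma card_edges (p : F) (Q : pred I) :
  #|[set e in edges p | Q e.2]| = #|[pred x | (p x != None) && Q x]|.
Proof.
rewrite -(card_in_imset (f := snd)); last first.
  move=> [a b] [a' b']; rewrite !inE /= => /andP[/eqP e1 _] /andP[/eqP e2 _] eb.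
  by subst b'; move: e1; rewrite e2 => -[->].
apply: eq_card => x; rewrite inE; apply/imsetP/idP => [[[a b] hab ->]|hx].
  by move: hab; rewrite !inE /= => /andP[/eqP -> ->].
move: hx; rewrite /= => /andP[]; case e: (p x) => [j|] // _ hq.
by exists (j, x); rewrite // !inE /= e eqxx.
Qed.

Lemma corank_size (p : F) : corank p = size (tree_roots p).
Proof.
have h1 : #|edges p| = #|[pred x | p x != None]|.
  rewrite (eq_card (B := [set e in edges p | predT e.2])) ?card_edges.
    by apply: eq_card => x; rewrite !inE andbT.
  by move=> e; rewrite !inE andbT.
rewrite /corank h1 size_roots.
have := cardC [pred x : I | p x != None]; rewrite card_ord.
have -> : #|[predC [pred x : I | p x != None]]| = #|[pred x | p x == None]|.
  by apply: eq_card => x; rewrite !inE /= negbK.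
move: #|[pred x | p x != None]| #|[pred x | p x == None]| => a b; lia.
Qed.

Lemma nth_roots_lt (p : F) i j : (i < j)%N -> (j < size (tree_roots p))%N ->
  (nth ord0 (tree_roots p) i < nth ord0 (tree_roots p) j)%N.
Proof.
move=> hij hj.
have := sorted_ltn_nth (@ltI_trans n) ord0 (sorted_roots p).
by move=> /(_ i j); rewrite !inE (ltn_trans hij hj) hj => /(_ isT isT hij).
Qed.

Lemma edges_tree (p : F) k : priority_forest p -> (k.+1 < size (tree_roots p))%N ->
  tree_edges p (nth ord0 (tree_roots p) k) =
  ((nth ord0 (tree_roots p) k.+1 : nat) - nth ord0 (tree_roots p) k - 1)%N.
Proof.
move=> hp hk.
have hi := prio_inc hp; have hg := prio_good hp.
set R := tree_roots p in hk *.
set c0 := nth ord0 R k; set c1 := nth ord0 R k.+1.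
have hc0 : p c0 = None by apply/eqP; rewrite -mem_roots mem_nth // ltnW.
have hc1 : p c1 = None by apply/eqP; rewrite -mem_roots mem_nth.
have hlt : (c0 < c1)%N by apply: nth_roots_lt.
have hbet x : p x = None -> (c0 < x)%N -> (c1 <= x)%N.
  move=> hx hcx; have hxR : x \in R by rewrite mem_roots hx.
  have hj := index_mem x R; rewrite hxR in hj.
  have ex := nth_index ord0 hxR.
  case: (ltngtP (index x R) k.+1) => h.
  - case: (ltngtP (index x R) k) => h'.
    + by have := nth_roots_lt h' (ltnW hk); rewrite ex -/c0; lia.
    + lia.
    + by move: hcx; rewrite -ex h' /c0 ltnn.
  - by have := nth_roots_lt h hj; rewrite ex -/c1; lia.
  - by rewrite -ex h.
have hpr x : (proot p x == c0) = (c0 <= x)%N && (x < c1)%N.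
  apply/eqP/andP => [e|[h1 h2]].
    split; first by rewrite -e; apply: proot_le.
    by apply: (proot_max hi hg hc1); rewrite e.
  have hpx := proot_root x hi; have hple := proot_le x hi.
  case: (ltngtP (proot p x) c0) => h.
  - by have := proot_max hi hg hc0 h; lia.
  - by have := hbet _ hpx h; lia.
  - exact: val_inj.
rewrite /tree_edges.
rewrite (card_edges p (fun x => proot p x == c0)).
rewrite (eq_card (B := [pred v : I | (c0.+1 <= v)%N && (v < c1)%N])); last first.
  move=> x; rewrite !inE /= hpr.
  case: (eqVneq x c0) => [->|nx]; first by rewrite hc0 /= ltnn.
  have nx' : (x : nat) != c0 by apply: contra nx => /eqP e; apply/eqP/val_inj.
  case hx: (p x) => [j|] /=.
    by apply/andP/andP => [[h1 h2]|[h1 h2]]; split => //; lia.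
  apply/esym/negbTE/negP => /andP[h1 h2]; have := hbet x hx h1; lia.
rewrite card_range; last exact: ltnW (ltn_ord c1).
lia.
Qed.

End Main.


Section Final.
Local Open Scope ring_scope.
Variable n : nat.
Local Notation I := 'I_n.+1.
Local Notation F := (forest n).

Lemma Pi_refl : reflexive (@Pi_le n).
Proof. by case=> [a|] //=; apply: subxx. Qed.

Lemma Pi_trans : transitive (@Pi_le n).
Proof.
case=> [b|] [a|] [c|] //=; exact: subset_trans.
Qed.

Lemma ext_anti (a b : F) : ext a b -> ext b a -> a = b.
Proof.
move=> hab hba; apply/ffunP => c.
case e: (a c) => [j|]; first by rewrite (extP hab e).
case e': (b c) => [j'|] //; by rewrite (extP hba e') in e.
Qed.

Lemma Pi_anti : antisymmetric (@Pi_le n).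
Proof.
case=> [a|] [b|] //= /andP[h1 h2]; congr Some; apply: val_inj.
by apply: ext_anti; rewrite -extE.
Qed.

Lemma sum_prio (X : pred F) (f : F -> int) :
  (\sum_(Q : prio n | X (val Q)) f (val Q) = \sum_(q | priority_forest q && X q) f q)%R.
Proof.
rewrite [RHS](reindex_omap (val : prio n -> F) (insub : F -> option (prio n))); last first.
  by move=> q /andP[hq _]; rewrite insubT.
apply: eq_bigl => Q; rewrite valK eqxx andbT (valP Q); done.
Qed.

Lemma roots_lt (P Q : prio n) : ext (val P) (val Q) -> Q != P ->
  (size (tree_roots (val Q)) < size (tree_roots (val P)))%N.
Proof.
move=> he nQP; rewrite !size_roots; apply: proper_card; apply/properP; split.
  apply/subsetP => c; rewrite !inE => /eqP hc; apply/eqP; exact: ext_root he hc.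
case: (pickP [pred c | (val P c == None) && (val Q c != None)]) => [c /andP[h1 h2]|h].
  by exists c; rewrite !inE.
exfalso; move/eqP: nQP; apply; apply: val_inj; apply/ffunP => c.
case e: (val P c) => [j|]; first exact: extP he e.
by move: (h c); rewrite /= e eqxx /= => /negbFE /eqP.
Qed.

Lemma mu_formula k : forall P : prio n, (size (tree_roots (val P)) < k)%N ->
  mu (Some P) None = G (tree_roots (val P)).
Proof.
elim: k => [|k IH] P // hk.
have hE := mob_right Pi_refl Pi_anti Pi_trans (x := Some P) (y := None) isT isT.
rewrite big_option_split /= mob_refl (bigD1 P) /= in hE; last by rewrite subxx.
have hpos : (0 < size (tree_roots (val P)))%N.
  by rewrite size_roots; apply/card_gt0P; exists ord0; rewrite inE /= inc_root0 // prio_inc // (valP P).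
have hC := sumC (valP P) (esym (prednK hpos)).
rewrite -sum_prio (bigD1 P) /= in hC; last exact: ext_refl.
set S := (\sum_(i | ext (sval P) (sval i) && (i != P)) G (tree_roots (sval i))) in hC.
have hS : (\sum_(v | (edges (val P) \subset edges (val v)) && true && (v != P))
            mobius (@Pi_le n) (Some v) None = S)%R.
  rewrite /S; apply: eq_big => [Q|Q /andP[/andP[hsub _] nQP]]; first by rewrite andbT extE.
  apply: IH; have := roots_lt (P := P) (Q := Q); rewrite -extE => /(_ hsub nQP); lia.
rewrite hS in hE.
rewrite /mu; move: hE hC; set m := mobius _ _ _; set g := G _.
move=> hE hC; lia.
Qed.

End Final.

Unset Implicit Arguments.
Local Open Scope ring_scope.

Theorem lemma5p13 (n : nat) (P : prio n) :
  (size (tree_roots (val P)) = 1%N -> mu (Some P) None = -1) /\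
  ((1 < size (tree_roots (val P)))%N ->
     mu (Some P) None =
       (-1) ^+ corank (val P) *
       \prod_(k < (size (tree_roots (val P))).-1)
          ((tree_edges (val P) (nth ord0 (tree_roots (val P)) k))%:Z)).
Proof.
have hmu := mu_formula (k := (size (tree_roots (val P))).+1) (ltnSn _).
rewrite hmu; split => [hs|hs].
  by rewrite /G hs expr1 big_ord0 mulr1.
rewrite /G corank_size; congr (_ * _); apply: eq_bigr => k _.
rewrite edges_tree //; first exact: (valP P).
move: (ltn_ord k) hs; move: (nat_of_ord k) => j; move: (size _) => m; rewrite -ltnS; case: m => // m. 
Qed.
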